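(* Let $m\ge n$ be positive integers of the same parity, and define \[ h(z)=\frac{1}{\sqrt2}\Bigl\{\bigl(\sqrt{z^2+1}+1\bigr)^{\frac{m+n}{2}}\bigl(\sqrt{z^2+1}+z\bigr)^{\frac{m-n}{2}}+(-1)^n\bigl(\sqrt{z^2+1}-1\bigr)^{\frac{m+n}{2}}\bigl(\sqrt{z^2+1}-z\bigr)^{\frac{m-n}{2}}\Bigr\}, \] which is a polynomial in $z$ (with the branch $\sqrt{z^2+1}=1$ at $z=0$). Let $\rho(t)=T_n(1-2t)+T_m(1+2t)$, whose degree is $m$ if $m>n$ and $2\lfloor m/2\rfloor$ if $m=n$. Then (i) $\deg h=\deg\rho$; (ii) $h(0)>0$; (iii) $h(z)\neq0$ for all $|z|<1$.
   Context: $T_k$ denotes the Chebyshev polynomial of the first kind, $T_k(\cos\theta)=\cos k\theta$. *)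

(* Defs.v *)
From mathcomp Require Import all_boot all_order all_algebra.
Set Implicit Arguments. Unset Strict Implicit. Unset Printing Implicit Defensive.
Import Order.TTheory GRing.Theory Num.Theory.
Local Open Scope ring_scope.

Fixpoint chebT (R : nzRingType) (k : nat) : {poly R} :=
  match k with
  | 0 => 1
  | 1 => 'X
  | S ((S k'') as k') => 'X *+ 2 * chebT R k' - chebT R k''
  end.

Definition chebrho (R : nzRingType) (m n : nat) : {poly R} :=
  (chebT R n \Po (1 - 'X *+ 2)) + (chebT R m \Po (1 + 'X *+ 2)).

(* Main.v *)
Require Import Defs.
From mathcomp Require Import all_boot all_order all_algebra.
From mathcomp Require Import ring.
Import Order.TTheory GRing.Theory Num.Theory.
Set Implicit Arguments. Unset Strict Implicit. Unset Printing Implicit Defensive.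
Local Open Scope ring_scope.
Section Pairs.
Variable R : comNzRingType.
Definition mul1 (Y : R) (v : R * R) : R * R := (v.1 + v.2 * Y, v.1 + v.2).
Definition mulx (x Y : R) (v : R * R) : R * R := (x * v.1 + v.2 * Y, v.1 + x * v.2).
Definition ev (s : R) (v : R * R) : R := v.1 + v.2 * s.

Lemma ev_mul1 Y s v : s ^+ 2 = Y -> ev s (mul1 Y v) = (1 + s) * ev s v.
Proof. by move=> <-; rewrite /ev /mul1 /=; ring. Qed.
Lemma ev_mulx x Y s v : s ^+ 2 = Y -> ev s (mulx x Y v) = (s + x) * ev s v.
Proof. by move=> <-; rewrite /ev /mulx /=; ring. Qed.
Lemma ev_iter1 Y s v a : s ^+ 2 = Y -> ev s (iter a (mul1 Y) v) = (1 + s) ^+ a * ev s v.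
Proof. move=> H; elim: a => [|a IH]; first by rewrite mul1r.
by rewrite iterS ev_mul1 // IH exprS mulrA. Qed.
Lemma ev_iterx x Y s v b : s ^+ 2 = Y -> ev s (iter b (mulx x Y) v) = (s + x) ^+ b * ev s v.
Proof. move=> H; elim: b => [|b IH]; first by rewrite mul1r.
by rewrite iterS ev_mulx // IH exprS mulrA. Qed.
Lemma ev_sum s v : ev s v + ev (- s) v = v.1 *+ 2.
Proof. rewrite /ev; ring. Qed.
End Pairs.

Section Horner.
Variable R : comNzRingType.
Definition hv (z : R) (v : {poly R} * {poly R}) : R * R := (v.1.[z], v.2.[z]).
Lemma hv_iter1 z Y v a : hv z (iter a (mul1 Y) v) = iter a (mul1 Y.[z]) (hv z v).
Proof. elim: a => [|a IH] //; rewrite !iterS -IH /hv /mul1 /=; by rewrite !hornerE. Qed.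
Lemma hv_iterx z Y v b : hv z (iter b (mulx 'X Y) v) = iter b (mulx z Y.[z]) (hv z v).
Proof. elim: b => [|b IH] //; rewrite !iterS -IH /hv /mulx /=; by rewrite !hornerE. Qed.
End Horner.
Section Sizes.
Variable R : numDomainType.
Implicit Types p q : {poly R}.

Lemma lead_gt0_neq0 p : 0 < lead_coef p -> p != 0.
Proof. by move=> H; rewrite -lead_coef_eq0 gt_eqF. Qed.

Lemma sz_addeq p q k : size p = k -> size q = k -> 0 < lead_coef p -> 0 < lead_coef q ->
  size (p + q) = k /\ lead_coef (p + q) = lead_coef p + lead_coef q.
Proof.
move=> sp sq lp lq.
have Hc : (p + q)`_k.-1 = lead_coef p + lead_coef q by rewrite coefD !lead_coefE sp sq.
have Hk : (0 < k)%N by rewrite -sp size_poly_gt0 lead_gt0_neq0.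
have Hs : size (p + q) = k.
  apply/eqP; rewrite eqn_leq; apply/andP; split.
    by apply: leq_trans (size_polyD _ _) _; rewrite sp sq maxnn.
  case: k Hk Hc {sp sq} => // k _ Hc; rewrite ltnNge; apply/negP => Hle.
  have := nth_default 0 Hle; rewrite [nth _ _ _]Hc => /eqP.
  by rewrite gt_eqF // addr_gt0.
by split => //; rewrite lead_coefE Hs.
Qed.

Lemma sz_addlt p q : (size q < size p)%N ->
  size (p + q) = size p /\ lead_coef (p + q) = lead_coef p.
Proof. by move=> H; rewrite size_polyDl // lead_coefDl. Qed.

Lemma sz_mul p q : 0 < lead_coef p -> 0 < lead_coef q ->
  size (p * q) = (size p + size q).-1 /\ 0 < lead_coef (p * q).
Proof.
move=> lp lq; rewrite size_mul ?lead_gt0_neq0 // lead_coefM; split => //.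
exact: mulr_gt0.
Qed.

Variable Y : {poly R}.
Hypothesis sY : size Y = 3.
Hypothesis lY : 0 < lead_coef Y.

Definition StO d (v : {poly R} * {poly R}) := [/\ size v.1 = d.+1, size v.2 = d.+1,
  0 < lead_coef v.1 & 0 < lead_coef v.2].
Definition StE d (v : {poly R} * {poly R}) := [/\ size v.1 = d.+3, size v.2 = d.+1,
  0 < lead_coef v.1 & 0 < lead_coef v.2].
Definition StZ e (v : {poly R} * {poly R}) := [/\ size v.1 = e.+2, size v.2 = e.+1,
  0 < lead_coef v.1 & 0 < lead_coef v.2].

Lemma szqY q : 0 < lead_coef q -> size (q * Y) = (size q).+2 /\ 0 < lead_coef (q * Y).
Proof. move=> lq; have [-> ->] := sz_mul lq lY; rewrite sY addn3; by []. Qed.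

Lemma szXq q : 0 < lead_coef q -> size ('X * q) = (size q).+1 /\ 0 < lead_coef ('X * q).
Proof. move=> lq; have lX : 0 < lead_coef ('X : {poly R}) by rewrite lead_coefX.
have [-> ->] := sz_mul lX lq; by rewrite size_polyX. Qed.

Lemma stO_E d v : StO d v -> StE d (mul1 Y v).
Proof.
case=> s1 s2 l1 l2; rewrite /mul1 /=.
have [sq lq] := szqY l2.
have [s3 l3] := sz_addeq s1 s2 l1 l2.
rewrite [v.1 + _ * _]addrC.
have Hlt_s4 : (size v.1 < size (v.2 * Y)%R)%N by rewrite sq s1 s2.
have [s4 l4] := sz_addlt Hlt_s4.
split; rewrite ?s4 ?sq ?s2 ?l4 ?s3 ?l3 //; exact: addr_gt0.
Qed.

Lemma stE_O d v : StE d v -> StO d.+2 (mul1 Y v).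
Proof.
case=> s1 s2 l1 l2; rewrite /mul1 /=.
have [sq lq] := szqY l2.
have e3 : size (v.2 * Y) = d.+3 by rewrite sq s2.
have [s3 l3] := sz_addeq s1 e3 l1 lq.
have Hlt_s4 : (size v.2 < size v.1)%N by rewrite s1 s2.
have [s4 l4] := sz_addlt Hlt_s4.
split; rewrite ?s4 ?sq ?s1 ?l4 ?s3 ?l3 //; exact: addr_gt0.
Qed.

Lemma stE_Z d v : StE d v -> StZ d.+2 (mulx 'X Y v).
Proof.
case=> s1 s2 l1 l2; rewrite /mulx /=.
have [sq lq] := szqY l2.
have [sx lx] := szXq l1.
have [sx2 lx2] := szXq l2.
have Hlt_s3 : (size (v.2 * Y)%R < size ('X * v.1)%R)%N by rewrite sq sx s1 s2.
have [s3 l3] := sz_addlt Hlt_s3.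
have Hlt_s4 : (size ('X * v.2)%R < size v.1)%N by rewrite sx2 s1 s2.
have [s4 l4] := sz_addlt Hlt_s4.
by split; rewrite ?s3 ?s4 ?l3 ?l4 ?sx ?s1.
Qed.

Lemma stO_Z d v : StO d v -> StZ d.+1 (mulx 'X Y v).
Proof.
case=> s1 s2 l1 l2; rewrite /mulx /=.
have [sq lq] := szqY l2.
have [sx lx] := szXq l1.
have [sx2 lx2] := szXq l2.
rewrite [_ * v.1 + _]addrC [v.1 + _]addrC.
have Hlt_s3 : (size ('X * v.1)%R < size (v.2 * Y)%R)%N by rewrite sq sx s1 s2.
have [s3 l3] := sz_addlt Hlt_s3.
have Hlt_s4 : (size v.1 < size ('X * v.2)%R)%N by rewrite sx2 s1 s2.
have [s4 l4] := sz_addlt Hlt_s4.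
by split; rewrite ?s3 ?s4 ?l3 ?l4 ?sx2 ?sq ?s2.
Qed.

Lemma stZ_Z e v : StZ e v -> StZ e.+1 (mulx 'X Y v).
Proof.
case=> s1 s2 l1 l2; rewrite /mulx /=.
have [sq lq] := szqY l2.
have [sx lx] := szXq l1.
have [sx2 lx2] := szXq l2.
have e1 : size ('X * v.1) = e.+3 by rewrite sx s1.
have e2 : size (v.2 * Y) = e.+3 by rewrite sq s2.
have [s3 l3] := sz_addeq e1 e2 lx lq.
have e4 : size ('X * v.2) = e.+2 by rewrite sx2 s2.
have [s4 l4] := sz_addeq s1 e4 l1 lx2.
split; rewrite ?s3 ?s4 ?l3 ?l4 //; exact: addr_gt0.
Qed.

Lemma st_iter1 k : StO k.*2 (iter k.*2.+1 (mul1 Y) (1, 0)) /\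
                   StE k.*2 (iter k.*2.+2 (mul1 Y) (1, 0)).
Proof.
elim: k => [|k [IH1 IH2]].
  have H0 : StO 0 (iter 1 (mul1 Y) (1, 0)).
    rewrite /= /mul1 /= mul0r !addr0; split; rewrite ?size_polyC ?oner_eq0 ?lead_coefC //.
  split => //; exact: stO_E.
have H : StO k.+1.*2 (iter k.+1.*2.+1 (mul1 Y) (1, 0)).
  by rewrite doubleS iterS; apply: stE_O.
split => //; rewrite iterS; exact: stO_E.
Qed.

Lemma size_P1 a : (0 < a)%N ->
  size (iter a (mul1 Y) (1, 0)).1 = (if odd a then a else a.+1) /\ 0 < lead_coef (iter a (mul1 Y) (1, 0)).1.
Proof.
have := odd_double_half a; move: (odd a) (a./2) => [] k <- a0.
  by have [[s1 _ l1 _] _] := st_iter1 k; rewrite add1n s1 l1.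
case: k a0 => // k _; have [_ [s1 _ l1 _]] := st_iter1 k.
by rewrite add0n doubleS s1 l1.
Qed.

Lemma st_Z a : (0 < a)%N -> StZ a (mulx 'X Y (iter a (mul1 Y) (1, 0))).
Proof.
have := odd_double_half a; move: (odd a) (a./2) => [] k <- a0.
  have [H _] := st_iter1 k; by rewrite add1n; apply: stO_Z.
case: k a0 => // k _; have [_ H] := st_iter1 k.
by rewrite add0n doubleS; apply: stE_Z.
Qed.

Lemma size_PZ a b : (0 < a)%N -> (0 < b)%N ->
  size (iter b (mulx 'X Y) (iter a (mul1 Y) (1, 0))).1 = (a + b).+1.
Proof.
move=> a0; case: b => // b _.
suff [s1 _ _ _] : StZ (a + b) (iter b.+1 (mulx 'X Y) (iter a (mul1 Y) (1, 0))).
  by rewrite s1 addnS.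
elim: b => [|b IH]; first by rewrite addn0; apply: st_Z.
by rewrite iterS addnS; apply: stZ_Z.
Qed.
End Sizes.
Section Cheb.
Variable R : numDomainType.

Lemma size_Xn_nat k N : (0 < N)%N -> size (('X^k : {poly R}) *+ N) = k.+1.
Proof. by move=> N0; rewrite -scaler_nat size_scale ?size_polyXn // pnatr_eq0 -lt0n. Qed.

Lemma cheb_dec k : exists r : {poly R},
  chebT R k.+1 = 'X^(k.+1) *+ (2 ^ k)%N + r /\ (size r <= k)%N.
Proof.
suff : (exists r : {poly R}, chebT R k.+1 = 'X^(k.+1) *+ (2 ^ k)%N + r /\ (size r <= k)%N) /\
       (exists r : {poly R}, chebT R k.+2 = 'X^(k.+2) *+ (2 ^ k.+1)%N + r /\ (size r <= k.+1)%N).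
  by case.
elim: k => [|k [[r1 [E1 S1]] [r2 [E2 S2]]]].
  split; first by exists 0; rewrite /= expr1 addr0 size_poly0.
  exists (-1); rewrite size_polyN size_polyC oner_eq0; split => //.
  by rewrite /= expn1 mulrnAl expr2.
split; first by exists r2.
exists ('X *+ 2 * r2 - chebT R k.+1); split.
  have -> : chebT R k.+3 = 'X *+ 2 * chebT R k.+2 - chebT R k.+1 by [].
  rewrite E2 mulrDr addrA; congr (_ + _ - _).
  by rewrite mulrnAl mulrnAr -mulrnA -exprS -expnSr.
apply: leq_trans (size_polyD _ _) _; rewrite size_polyN geq_max; apply/andP; split.
  rewrite mulrnAl -scaler_nat size_scale ?pnatr_eq0 //.
  by apply: leq_trans (size_polyMleq _ _) _; rewrite size_polyX /=; apply: leq_trans S2 _.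
rewrite E1; apply: leq_trans (size_polyD _ _) _; rewrite geq_max size_Xn_nat ?expn_gt0 //=.
by rewrite ltnSn; apply: leq_trans S1 _; rewrite ltnW // ltnW.
Qed.
End Cheb.

Section Rho.
Variable R : numDomainType.
Let s : {poly R} := 'X *+ 2.

Lemma lead_s : size s = 2 /\ 0 < lead_coef s.
Proof. by rewrite /s -scaler_nat size_scale ?size_polyX ?lead_coefZ ?lead_coefX ?mulr1 ?pnatr_eq0 ?ltr0n. Qed.

Lemma size_1s : size (1 + s) = 2 /\ size (1 - s) = 2.
Proof.
have [ss _] := lead_s.
by rewrite addrC size_polyDl ?ss ?size_polyC ?oner_eq0 // [1 - _]addrC size_polyDl size_polyN ?ss ?size_polyC ?oner_eq0.
Qed.

Lemma Tcomp k N (r q : {poly R}) : ('X^k *+ N + r) \Po q = q ^+ k *+ N + (r \Po q).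
Proof. by rewrite comp_polyD -scaler_nat comp_polyZ comp_Xn_poly scaler_nat. Qed.

Lemma size_T k : size (chebT R k.+1) = k.+2.
Proof.
have [r [-> Sr]] := cheb_dec R k.
by rewrite size_polyDl size_Xn_nat ?expn_gt0 // ltnS (leq_trans Sr).
Qed.

Lemma rho_size m n : (n <= m)%N -> (0 < n)%N ->
  size (chebrho R m n) = if (n < m)%N then m.+1 else (if odd m then m else m.+1).
Proof.
move=> nm n0; have [s1 s2] := size_1s; rewrite /chebrho.
case: ltnP => [ltnm|lemn].
  case: m nm ltnm => // m _ ltnm.
  rewrite addrC size_polyDl size_comp_poly2 ?size_T //.
  rewrite !size_comp_poly2 //; case: n n0 ltnm => // n _ ltnm; by rewrite !size_T.
have Enm : n = m by apply/eqP; rewrite eqn_leq nm lemn.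
subst n.
case: m n0 nm lemn => // k _ _ _.
have [r [-> Sr]] := cheb_dec R k.
rewrite !Tcomp addrACA -mulrnDl.
have [ss ls] := lead_s.
have sY : size (s ^+ 2) = 3 by have [-> _] := sz_mul ls ls; rewrite ss.
have lY : 0 < lead_coef (s ^+ 2) by have [_ ->] := sz_mul ls ls.
set v := iter k.+1 (mul1 (s ^+ 2)) (1, 0).
have -> : (1 - s) ^+ k.+1 + (1 + s) ^+ k.+1 = v.1 *+ 2.
  rewrite -(ev_sum s v) /v !ev_iter1 ?sqrrN // /ev /= !mul0r !addr0 !mulr1 addrC; by [].
have [sv lv] := size_P1 sY lY (ltn0Sn k).
rewrite -mulrnA -scaler_nat size_polyDl size_scale ?sv ?pnatr_eq0 ?muln_eq0 ?expn_eq0 //.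
apply: leq_ltn_trans (size_polyD _ _) _; rewrite gtn_max !size_comp_poly2 // andbb.
by apply: leq_ltn_trans Sr _; case: ifP.

Qed.
End Rho.

Section Ineq.
Variable C : numClosedFieldType.

Lemma geom (w : C) : `|w| < 1 -> 2 * `|w| < `|1 - w| * `|1 + w| ->
  `|w| * `|1 - w| <= `|1 + w|.
Proof.
move=> w1 H.
have P : `|1 + w| ^+ 2 + `|1 - w| ^+ 2 = 2 + 2 * `|w| ^+ 2.
  by rewrite !normCK !rmorphD !rmorphN rmorph1; ring.
move: H w1 P; set r := `|w|; set A := `|1 + w|; set B := `|1 - w| => H w1 P.
have r0 : 0 <= r := normr_ge0 _.
have A0 : 0 <= A := normr_ge0 _.
have B0 : 0 <= B := normr_ge0 _.
rewrite real_leNgt ?realM ?normr_real //; apply/negP => Hlt.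
have HN1 : A ^+ 2 < r ^+ 2 * B ^+ 2.
  by rewrite -exprMn ltr_pXn2r // nnegrE ?mulr_ge0.
have H1 : (2 * r) ^+ 2 < (B * A) ^+ 2.
  by rewrite ltr_pXn2r // nnegrE ?mulr_ge0 ?ler0n.
have R1 : r ^+ 2 < 1 by rewrite exprn_ilt1.
have RR0 : 0 <= r ^+ 2 := exprn_ge0 _ r0.
move: HN1 H1 R1 P RR0; rewrite !exprMn.
move: (A ^+ 2) (B ^+ 2) (r ^+ 2) => N1 N2 RR HN1 H1 R1 P RR0.
have N1e : N1 = 2 + 2 * RR - N2 by rewrite -P; ring.
have g1 : 0 < N2 - 2.
  have h0 : 0 < 1 + RR by rewrite ltr_wpDr.
  rewrite -(pmulr_rgt0 _ h0).
  have -> : (1 + RR) * (N2 - 2) = RR * N2 - N1 by rewrite N1e; ring.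
  by rewrite subr_gt0.
have g2 : 0 < 2 * RR - N2.
  rewrite -(pmulr_rgt0 _ g1).
  have -> : (N2 - 2) * (2 * RR - N2) = N2 * N1 - 2 ^+ 2 * RR by rewrite N1e; ring.
  by rewrite subr_gt0.
have g3 : 0 < 1 - RR by rewrite subr_gt0.
have := addr_gt0 (addr_gt0 g1 g2) (addr_gt0 g3 g3).
have -> : N2 - 2 + (2 * RR - N2) + (1 - RR + (1 - RR)) = 0 by ring.
by rewrite ltxx.
Qed.

Lemma Fne (w : C) (a b n : nat) : a = (n + b)%N -> (0 < n)%N -> `|w| < 1 ->
  2 * `|w| < `|1 - w| * `|1 + w| ->
  ((1 + w) ^+ 2) ^+ b + (-1) ^+ n * (w ^+ 2) ^+ a * ((1 - w) ^+ 2) ^+ b != 0.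
Proof.
move=> -> n0 w1 H; have G := geom w1 H.
apply/negP; rewrite addr_eq0 => /eqP F.
have Hn : `|1 + w| ^+ 2 ^+ b = `|w| ^+ 2 ^+ (n + b) * `|1 - w| ^+ 2 ^+ b.
  by rewrite -!normrX F normrN !normrM !normrX normrN normr1 expr1n mul1r.
move/eqP: Hn; rewrite eq_sym lt_eqF //.
have r0 : 0 <= `|w| := normr_ge0 _.
have B0 : 0 <= `|1 - w| := normr_ge0 _.
have A0 : 0 < `|1 + w|.
  rewrite normr_gt0; apply/negP => /eqP E.
  have Ew : w = -1 by apply/eqP; rewrite -addr_eq0 addrC E.
  by move: w1; rewrite Ew normrN normr1 ltxx.
rewrite exprD -mulrA -exprMn -exprMn.
have le : ((`|w| * `|1 - w|) ^+ 2) ^+ b <= (`|1 + w| ^+ 2) ^+ b.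
  apply: lerXn2r; rewrite ?nnegrE ?exprn_ge0 ?mulr_ge0 //.
  by apply: lerXn2r; rewrite ?nnegrE ?mulr_ge0 // ltW.
have ltn : (`|w| ^+ 2) ^+ n < 1 by rewrite exprn_ilt1 ?exprn_ge0 ?exprn_ilt1 // -lt0n.
have Ap : 0 < (`|1 + w| ^+ 2) ^+ b by rewrite !exprn_gt0.
apply: le_lt_trans (ler_wpM2l _ le) _; first by rewrite !exprn_ge0.
by rewrite -[X in _ < X]mul1r ltr_pM2r.
Qed.

Lemma branch (z s : C) (a b n : nat) : a = (n + b)%N -> (0 < n)%N ->
  s ^+ 2 = z ^+ 2 + 1 -> z != 0 -> `|z| < 1 -> `|z / (1 + s)| < 1 ->
  (s + 1) ^+ a * (s + z) ^+ b + (-1) ^+ n * (s - 1) ^+ a * (s - z) ^+ b != 0.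
Proof.
move=> ha n0 Hs z0 z1 w1.
have zz : z ^+ 2 = (s - 1) * (1 + s).
  have -> : (s - 1) * (1 + s) = s ^+ 2 - 1 by ring.
  by rewrite Hs addrK.
have d0 : 1 + s != 0.
  apply/negP => /eqP E; have : z ^+ 2 != 0 by rewrite expf_neq0.
  by rewrite zz E mulr0 eqxx.
have two0 : (2 : C) != 0 by rewrite pnatr_eq0.
have F2 : s - 1 = (z / (1 + s)) ^+ 2 * (1 + s).
  apply/eqP; rewrite -subr_eq0 -oppr_eq0 opprB.
  have -> : (z / (1 + s)) ^+ 2 * (1 + s) - (s - 1) = (z ^+ 2 - (s - 1) * (1 + s)) / (1 + s) by field.
  by rewrite zz subrr mul0r.
have F3 : s + z = (1 + z / (1 + s)) ^+ 2 * ((1 + s) / 2).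
  apply/eqP; rewrite -subr_eq0 -oppr_eq0 opprB.
  have -> : (1 + z / (1 + s)) ^+ 2 * ((1 + s) / 2) - (s + z) = (z ^+ 2 - (s - 1) * (1 + s)) / (2 * (1 + s)) by field.
  by rewrite zz subrr mul0r.
have F4 : s - z = (1 - z / (1 + s)) ^+ 2 * ((1 + s) / 2).
  apply/eqP; rewrite -subr_eq0 -oppr_eq0 opprB.
  have -> : (1 - z / (1 + s)) ^+ 2 * ((1 + s) / 2) - (s - z) = (z ^+ 2 - (s - 1) * (1 + s)) / (2 * (1 + s)) by field.
  by rewrite zz subrr mul0r.
have dd : (1 + s) * (1 - (z / (1 + s)) ^+ 2) = 2.
  have -> : (1 + s) * (1 - (z / (1 + s)) ^+ 2) = (1 + s) - (z / (1 + s)) ^+ 2 * (1 + s) by ring.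
  rewrite -F2; ring.
move: w1 F2 F3 F4 dd; set w := z / (1 + s) => w1 F2 F3 F4 dd.
have zw : z * (1 - w ^+ 2) = 2 * w.
  by rewrite -dd /w; field.
have H : 2 * `|w| < `|1 - w| * `|1 + w|.
  have e : 1 - w ^+ 2 = (1 - w) * (1 + w) by ring.
  have nz : 0 < `|1 - w ^+ 2|.
    by rewrite normr_gt0; apply/negP => /eqP E; move: dd; rewrite E mulr0 => /eqP; rewrite eq_sym (negPf two0).
  rewrite -normrM -e -[2]ger0_norm ?ler0n // -normrM -zw normrM.
  by rewrite -[X in _ < X]mul1r ltr_pM2r.
have := Fne ha n0 w1 H.
rewrite (addrC s 1) F2 F3 F4.
set F := (_ + _ * _ * _); move=> FN.
have -> : (1 + s) ^+ a * ((1 + w) ^+ 2 * ((1 + s) / 2)) ^+ b +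
  (-1) ^+ n * (w ^+ 2 * (1 + s)) ^+ a * ((1 - w) ^+ 2 * ((1 + s) / 2)) ^+ b
  = (1 + s) ^+ a * ((1 + s) / 2) ^+ b * F by rewrite /F !exprMn; ring.
by rewrite !mulf_neq0 ?expf_neq0 ?mulf_neq0 ?invr_eq0.
Qed.

Lemma wfacts (z s : C) : s ^+ 2 = z ^+ 2 + 1 -> z != 0 -> `|z| < 1 ->
  1 + s != 0 /\ 2 * `|z / (1 + s)| < `|1 - z / (1 + s)| * `|1 + z / (1 + s)|.
Proof.
move=> Hs z0 z1.
have zz : z ^+ 2 = (s - 1) * (1 + s).
  have -> : (s - 1) * (1 + s) = s ^+ 2 - 1 by ring.
  by rewrite Hs addrK.
have d0 : 1 + s != 0.
  apply/negP => /eqP E; have : z ^+ 2 != 0 by rewrite expf_neq0.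
  by rewrite zz E mulr0 eqxx.
split => //.
have two0 : (2 : C) != 0 by rewrite pnatr_eq0.
have F2 : s - 1 = (z / (1 + s)) ^+ 2 * (1 + s).
  apply/eqP; rewrite -subr_eq0 -oppr_eq0 opprB.
  have -> : (z / (1 + s)) ^+ 2 * (1 + s) - (s - 1) = (z ^+ 2 - (s - 1) * (1 + s)) / (1 + s) by field.
  by rewrite zz subrr mul0r.
have dd : (1 + s) * (1 - (z / (1 + s)) ^+ 2) = 2.
  have -> : (1 + s) * (1 - (z / (1 + s)) ^+ 2) = (1 + s) - (z / (1 + s)) ^+ 2 * (1 + s) by ring.
  rewrite -F2; ring.
move: F2 dd; set w := z / (1 + s) => F2 dd.
have zw : z * (1 - w ^+ 2) = 2 * w.
  by rewrite -dd /w; field.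
have e : 1 - w ^+ 2 = (1 - w) * (1 + w) by ring.
have nz : 0 < `|1 - w ^+ 2|.
  by rewrite normr_gt0; apply/negP => /eqP E; move: dd; rewrite E mulr0 => /eqP; rewrite eq_sym (negPf two0).
rewrite -normrM -e -[2]ger0_norm ?ler0n // -normrM -zw normrM.
by rewrite -[X in _ < X]mul1r ltr_pM2r.
Qed.

Lemma ne1 (w : C) : 2 * `|w| < `|1 - w| * `|1 + w| -> `|w| != 1.
Proof.
move=> H; apply/negP => /eqP w1; move: H.
have e : (1 - w) * (1 + w) = 1 - w ^+ 2 by ring.
rewrite -normrM e w1 mulr1.
have : `|1 - w ^+ 2| <= 2.
  apply: le_trans (ler_normB _ _) _; rewrite normr1 normrX w1 expr1n; by [].
by move=> le lt; have := lt_le_trans lt le; rewrite ltxx.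
Qed.

Lemma choose_s (z : C) : z != 0 -> `|z| < 1 ->
  exists s, s ^+ 2 = z ^+ 2 + 1 /\ `|z / (1 + s)| < 1.
Proof.
move=> z0 z1; set t := sqrtC (z ^+ 2 + 1).
have ht : t ^+ 2 = z ^+ 2 + 1 by rewrite sqrtCK.
have ht' : (- t) ^+ 2 = z ^+ 2 + 1 by rewrite sqrrN.
have [d1 H1] := wfacts ht z0 z1.
have [d2 H2] := wfacts ht' z0 z1.
have prod : z / (1 + t) * (z / (1 + - t)) = -1.
  have e : (1 + t) * (1 + - t) = - z ^+ 2.
    have -> : (1 + t) * (1 + - t) = 1 - t ^+ 2 by ring.
    by rewrite ht; ring.
  have zn : z ^+ 2 != 0 by rewrite expf_neq0.
  by rewrite mulf_div -expr2 e invrN mulrN divff.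
have nprod : `|z / (1 + t)| * `|z / (1 + - t)| = 1.
  by rewrite -normrM prod normrN normr1.
have := ne1 H1; set p := `|z / (1 + t)| => p1.
have p0 : 0 <= p := normr_ge0 _.
case: (real_ltgtP (normr_real (z / (1 + t))) (real1 C)) => [lt|gt|eq].
- by exists t.
- exists (- t); split => //.
  have pn0 : p != 0 by apply/negP => /eqP E; move: gt; rewrite -/p E ltr10.
  have -> : `|z / (1 + - t)| = p^-1.
    by apply: (mulfI pn0); rewrite nprod divff.
  by rewrite invf_lt1 // lt_neqAle eq_sym pn0.
- by move: p1; rewrite /p eq eqxx.
Qed.
End Ineq.

Lemma sqrt2_aux (C : numClosedFieldType) (c x : C) : c ^+ 2 = 2 -> c != 0 ->
  c * x = c^-1 * (x *+ 2).
Proof. by move=> h c0; rewrite -mulr_natr -h; field. Qed.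

Theorem mainTheorem2 (C : numClosedFieldType) (m n : nat)
    (hn : (0 < n)%N) (hnm : (n <= m)%N) (hpar : odd m = odd n) :
  exists h : {poly C},
    (forall z s : C, s ^+ 2 = z ^+ 2 + 1 ->
       h.[z] = (sqrtC 2)^-1 *
         ((s + 1) ^+ ((m + n)./2) * (s + z) ^+ ((m - n)./2)
          + (-1) ^+ n * (s - 1) ^+ ((m + n)./2) * (s - z) ^+ ((m - n)./2)))
    /\ (size h).-1 = (size (chebrho C m n)).-1
    /\ 0 < h.[0]
    /\ (forall z : C, `|z| < 1 -> h.[z] != 0).
Proof.
set a := (m + n)./2; set b := (m - n)./2.
have hb : (m - n)%N = b.*2.
  by rewrite /b halfK oddB // hpar addbb subn0.
have Em : m = (n + b.*2)%N by rewrite -hb subnKC.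
have ha : a = (n + b)%N.
  rewrite /a Em (_ : (n + b.*2 + n)%N = (n + b).*2) ?doubleK //.
  by rewrite doubleD addnC addnA addnn.
have hm : m = (a + b)%N by rewrite Em ha -addnn addnA.
have a0 : (0 < a)%N by rewrite ha ltn_addr.
have sgn : (-1) ^+ n = (-1) ^+ (a + b) :> C by rewrite -hm -signr_odd -hpar signr_odd.
clearbody a b.
set Y0 : {poly C} := 'X^2 + 1.
have sY0 : size Y0 = 3 by rewrite /Y0 size_polyDl ?size_polyXn // size_polyC oner_eq0 ?size_polyXn.
have lY0 : 0 < lead_coef Y0 by rewrite /Y0 lead_coefDl ?lead_coefXn ?ltr01 // size_polyC oner_eq0 ?size_polyXn.
set A := iter b (mulx 'X Y0) (iter a (mul1 Y0) (1, 0)).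
have s2 : sqrtC 2 ^+ 2 = 2 :> C by rewrite sqrtCK.
have s20 : sqrtC 2 != 0 :> C by rewrite gt_eqF // sqrtC_gt0 ltr0n.
have HA : forall z s : C, s ^+ 2 = z ^+ 2 + 1 ->
    A.1.[z] *+ 2 = (s + 1) ^+ a * (s + z) ^+ b + (-1) ^+ n * (s - 1) ^+ a * (s - z) ^+ b.
  move=> z s Hs.
  have -> : A.1.[z] = (hv z A).1 by [].
  have hY : Y0.[z] = z ^+ 2 + 1 by rewrite /Y0 !hornerE.
  have h10 : hv z (1, 0) = (1, 0) by rewrite /hv /= !hornerE.
  rewrite /A hv_iterx hv_iter1 h10 hY.
  rewrite -(ev_sum s) ev_iterx // ev_iter1 // ev_iterx ?sqrrN // ev_iter1 ?sqrrN //.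
  rewrite /ev /= !mul0r !addr0 !mulr1.
  have -> : - s + z = - (s - z) by rewrite opprB addrC.
  have -> : 1 + - s = - (s - 1) by rewrite opprB.
  rewrite (exprNn (s - z)) (exprNn (s - 1)) sgn exprD (addrC 1 s); ring.
have Hform : forall z s : C, s ^+ 2 = z ^+ 2 + 1 ->
    (sqrtC 2 *: A.1).[z] = (sqrtC 2)^-1 *
         ((s + 1) ^+ a * (s + z) ^+ b + (-1) ^+ n * (s - 1) ^+ a * (s - z) ^+ b).
  by move=> z s Hs; rewrite hornerZ -(HA z s Hs) sqrt2_aux.
have Hpos : 0 < (sqrtC 2 *: A.1).[0].
  rewrite hornerZ mulr_gt0 ?sqrtC_gt0 ?ltr0n // -(pmulrn_lgt0 _ (isT : (0 < 2)%N)).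
  rewrite (HA 0 1) ?expr1n ?expr0n ?add0r // subrr expr0n gtn_eqF // mulr0 mul0r addr0.
  by rewrite addr0 expr1n mulr1 exprn_gt0 // addr_gt0 ?ltr01.
exists (sqrtC 2 *: A.1); split => //; split; last split => //.
  rewrite size_scale // rho_size //.
  case: ltnP => [ltnm|lemn].
    have b0 : (0 < b)%N by rewrite -double_gt0 -hb subn_gt0.
    by rewrite /A size_PZ // -hm.
  have Enm : m = n by apply/eqP; rewrite eqn_leq lemn hnm.
  have b0 : b = 0%N by apply/eqP; rewrite -double_eq0 -hb Enm subnn.
  have am : a = m by rewrite hm b0 addn0.
  by rewrite /A b0 /= (proj1 (size_P1 sY0 lY0 a0)) am.
move=> z z1.
have [->|z0] := eqVneq z 0; first by rewrite gt_eqF.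
have [s [Hs w1]] := choose_s z0 z1.
rewrite (Hform z s Hs) mulf_neq0 ?invr_eq0 //.
exact: branch ha hn Hs z0 z1 w1.
Qed.
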